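(* Let $(A,L,\theta_L)$ be a restricted Lie-Rinehart algebra such that $L$ is projective as $A$-module, and let $(A,M,\theta_M)$ be a strongly abelian restricted Lie-Rinehart algebra. Then, the equivalence classes of abelian extensions of $(A,L,\theta_L)$ by $(A,M,\theta_M)$ are classified by $\mathrm{H}^2_{\rm LR}(L;M)$.
   Context: $\mathbb{K}$ is a field of characteristic $2$. A restricted Lie algebra is a Lie algebra $L$ with a map $x\mapsto x^{[2]}$ such that $(\lambda x)^{[2]}=\lambda^2x^{[2]}$, $\mathrm{ad}_{x^{[2]}}=(\mathrm{ad}_x)^2$ and $(x+y)^{[2]}=x^{[2]}+y^{[2]}+[x,y]$. A restricted Lie-Rinehart algebra is a triple $(A,L,\theta)$ where $A$ is an associative commutative algebra, $L$ is a restricted Lie algebra which is also an $A$-module, and $\theta:L\to\mathrm{Der}(A)$ is an $A$-linear restricted Lie algebra morphism such that $[x,ay]=a[x,y]+\theta(x)(a)y$ and $(ax)^{[2]}=a^2x^{[2]}+\theta(ax)(a)x$ for all $x,y\in L$, $a\in A$. A morphism of restricted Lie-Rinehart algebras over the same $A$ is an $A$-linear restricted Lie morphism $\varphi$ with $\theta_H\circ\varphi=\theta_L$. $(A,M,\theta_M)$ is strongly abelian if $[m,n]=0$ and $m^{[2]}=0$ for all $m,n\in M$. An abelian extension of $(A,L,\theta_L)$ by $(A,M,\theta_M)$ is a short exact sequence of restricted Lie-Rinehart algebras $0\to(A,M,\theta_M)\xrightarrow{\iota}(A,E,\theta_E)\xrightarrow{\pi}(A,L,\theta_L)\to0$ (this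 forces $\theta_M=0$); two such extensions $E_1,E_2$ are equivalent if there is a restricted Lie-Rinehart morphism $\kappa:E_1\to E_2$ with $\kappa\circ\iota_1=\iota_2$ and $\pi_2\circ\kappa=\pi_1$. Such an extension makes $M$ a restricted Lie-Rinehart module over $L$ via $\rho(x)(m)=\iota^{-1}([\tilde x,\iota(m)]_E)$ with $\pi(\tilde x)=x$, i.e. $\rho:L\to\mathrm{End}(M)$ is a restricted Lie morphism with $\rho(x)(am)=a\rho(x)(m)+\theta_L(x)(a)m$. The cohomology $\mathrm{H}^2_{\rm LR}(L;M)$ is defined as follows: $C^1_{\rm LR}(L;M)=\mathrm{Hom}_A(L,M)$; $C^2_{\rm LR}(L;M)$ consists of pairs $(\varphi,\omega)$ with $\varphi:\wedge^2L\to M$ alternating and $A$-bilinear and $\omega:L\to M$ satisfying $\omega(\lambda x)=\lambda^2\omega(x)$, $\omega(x+y)=\omega(x)+\omega(y)+\varphi(x,y)$, $\omega(ax)=a^2\omega(x)$; $C^3_{\rm LR}$ consists of pairs $(\varphi,\omega)$ with $\varphi:\wedge^3L\to M$ $A$-trilinear, $\omega:L\otimes L\to M$ with $\omega(\lambda x,z)=\lambda^2\omega(x,z)$, $\omega(x+y,z)=\omega(x,z)+\omega(y,z)+\varphi(x,y,z)$, $\omega(ax,z)=a^2\omega(x,z)$, $\omega(x,az)=a\omega(x,z)$, linear in $z$. The differentials are $\mathrm{d}^1\psi=(\mathrm{d}_{\rm CE}\psi,\delta^1\psi)$ with $\mathrm{d}_{\rm CE}\psi(x,y)=\psi([x,y])+\rho(x)\psi(y)+\rho(y)\psi(x)$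 and $\delta^1\psi(x)=\psi(x^{[2]})+\rho(x)\psi(x)$; and $\mathrm{d}^2(\varphi,\omega)=(\mathrm{d}_{\rm CE}\varphi,\delta^2\omega)$ with $\mathrm{d}_{\rm CE}\varphi(x,y,z)=\varphi([x,y],z)+\varphi([x,z],y)+\varphi([y,z],x)+\rho(x)\varphi(y,z)+\rho(y)\varphi(x,z)+\rho(z)\varphi(x,y)$ and $\delta^2\omega(x,z)=\rho(x)\varphi(x,z)+\rho(z)\omega(x)+\varphi(x^{[2]},z)+\varphi([x,z],x)$. Then $\mathrm{H}^2_{\rm LR}(L;M)=\ker\mathrm{d}^2/\mathrm{im}\,\mathrm{d}^1$. *)

(* Defs.v *)
From HB Require Import structures.
From mathcomp Require Import all_boot all_algebra.
Set Implicit Arguments. Unset Strict Implicit. Unset Printing Implicit Defensive.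
Import GRing.Theory.
Local Open Scope ring_scope.

Section RLR.
Variables (K : fieldType) (A : comAlgType K).

Definition is_derivation (d : A -> A) : Prop :=
  (forall (k : K) (a b : A), d (k *: a + b) = k *: d a + d b) /\
  (forall a b : A, d (a * b) = a * d b + d a * b).

Definition A_linear (V W : lmodType A) (f : V -> W) : Prop :=
  forall (a : A) (x y : V), f (a *: x + y) = a *: f x + f y.

Definition projective_module (L : lmodType A) : Prop :=
  forall (P Q : lmodType A) (g : P -> Q) (f : L -> Q),
    A_linear g -> (forall q, exists p, g p = q) -> A_linear f ->
    exists h : L -> P, A_linear h /\ forall x, g (h x) = f x.

Definition is_lie (L : lmodType A) (br : L -> L -> L) : Prop :=
  (forall (k : K) x y z, br (k%:A *: x + y) z = k%:A *: br x z + br y z) /\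
  (forall (k : K) x y z, br x (k%:A *: y + z) = k%:A *: br x y + br x z) /\
  (forall x, br x x = 0) /\
  (forall x y z, br x (br y z) + br y (br z x) + br z (br x y) = 0).

(* restricted Lie algebra in characteristic 2 *)
Definition is_restricted_lie (L : lmodType A) (br : L -> L -> L) (pm : L -> L) : Prop :=
  is_lie br /\
  (forall (k : K) x, pm (k%:A *: x) = (k ^+ 2)%:A *: pm x) /\
  (forall x y, br (pm x) y = br x (br x y)) /\
  (forall x y, pm (x + y) = pm x + pm y + br x y).

Definition is_RLR (L : lmodType A) (br : L -> L -> L) (pm : L -> L)
    (th : L -> A -> A) : Prop :=
  is_restricted_lie br pm /\
  (forall x, is_derivation (th x)) /\
  (forall a x y b, th (a *: x + y) b = a * th x b + th y b) /\
  (forall x y b, th (br x y) b = th x (th y b) - th y (th x b)) /\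
  (forall x b, th (pm x) b = th x (th x b)) /\
  (forall x a y, br x (a *: y) = a *: br x y + th x a *: y) /\
  (forall a x, pm (a *: x) = a ^+ 2 *: pm x + th (a *: x) a *: x).

Definition is_RLR_morphism (L H : lmodType A)
    (brL : L -> L -> L) (pmL : L -> L) (thL : L -> A -> A)
    (brH : H -> H -> H) (pmH : H -> H) (thH : H -> A -> A) (f : L -> H) : Prop :=
  A_linear f /\
  (forall x y, f (brL x y) = brH (f x) (f y)) /\
  (forall x, f (pmL x) = pmH (f x)) /\
  (forall x b, thH (f x) b = thL x b).

Definition strongly_abelian (M : lmodType A) (br : M -> M -> M) (pm : M -> M) : Prop :=
  (forall m n, br m n = 0) /\ (forall m, pm m = 0).

Section Ext.
Variables (L M : lmodType A).
Variables (brL : L -> L -> L) (pmL : L -> L) (thL : L -> A -> A).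
Variables (brM : M -> M -> M) (pmM : M -> M) (thM : M -> A -> A).

Record abelian_ext := AbelianExt {
  ext_E : lmodType A;
  ext_br : ext_E -> ext_E -> ext_E;
  ext_pm : ext_E -> ext_E;
  ext_th : ext_E -> A -> A;
  ext_RLR : is_RLR ext_br ext_pm ext_th;
  ext_iota : M -> ext_E;
  ext_pi : ext_E -> L;
  ext_iota_mor : is_RLR_morphism brM pmM thM ext_br ext_pm ext_th ext_iota;
  ext_pi_mor : is_RLR_morphism ext_br ext_pm ext_th brL pmL thL ext_pi;
  ext_iota_inj : injective ext_iota;
  ext_pi_surj : forall x : L, exists e, ext_pi e = x;
  ext_exact : forall e, ext_pi e = 0 <-> exists m, e = ext_iota m
}.
Arguments ext_br : clear implicits.
Arguments ext_pm : clear implicits.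
Arguments ext_th : clear implicits.
Arguments ext_iota : clear implicits.
Arguments ext_pi : clear implicits.

Definition ext_equiv (X Y : abelian_ext) : Prop :=
  exists kappa : ext_E X -> ext_E Y,
    is_RLR_morphism (ext_br X) (ext_pm X) (ext_th X)
                    (ext_br Y) (ext_pm Y) (ext_th Y) kappa /\
    (forall m, kappa (ext_iota X m) = ext_iota Y m) /\
    (forall e, ext_pi Y (kappa e) = ext_pi X e).

Definition is_RLR_module (rho : L -> M -> M) : Prop :=
  (forall x (k : K) m n, rho x (k%:A *: m + n) = k%:A *: rho x m + rho x n) /\
  (forall a x y m, rho (a *: x + y) m = a *: rho x m + rho y m) /\
  (forall x y m, rho (brL x y) m = rho x (rho y m) - rho y (rho x m)) /\
  (forall x m, rho (pmL x) m = rho x (rho x m)) /\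
  (forall x a m, rho x (a *: m) = a *: rho x m + thL x a *: m).

Definition induces (rho : L -> M -> M) (X : abelian_ext) : Prop :=
  forall e m, ext_iota X (rho (ext_pi X e) m) = ext_br X e (ext_iota X m).

Variable rho : L -> M -> M.

Definition is_C1 (psi : L -> M) : Prop := A_linear psi.

Definition is_C2 (phi : L -> L -> M) (om : L -> M) : Prop :=
  (forall x, phi x x = 0) /\
  (forall a x y z, phi (a *: x + y) z = a *: phi x z + phi y z) /\
  (forall a x y z, phi x (a *: y + z) = a *: phi x y + phi x z) /\
  (forall (k : K) x, om (k%:A *: x) = (k ^+ 2)%:A *: om x) /\
  (forall x y, om (x + y) = om x + om y + phi x y) /\
  (forall a x, om (a *: x) = a ^+ 2 *: om x).

Definition dCE1 (psi : L -> M) (x y : L) : M :=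
  psi (brL x y) + rho x (psi y) + rho y (psi x).

Definition delta1 (psi : L -> M) (x : L) : M :=
  psi (pmL x) + rho x (psi x).

Definition dCE2 (phi : L -> L -> M) (x y z : L) : M :=
  phi (brL x y) z + phi (brL x z) y + phi (brL y z) x
  + rho x (phi y z) + rho y (phi x z) + rho z (phi x y).

Definition delta2 (phi : L -> L -> M) (om : L -> M) (x z : L) : M :=
  rho x (phi x z) + rho z (om x) + phi (pmL x) z + phi (brL x z) x.

Definition is_cocycle (c : (L -> L -> M) * (L -> M)) : Prop :=
  is_C2 c.1 c.2 /\
  (forall x y z, dCE2 c.1 x y z = 0) /\
  (forall x z, delta2 c.1 c.2 x z = 0).

(* equal classes in H^2 = ker d^2 / im d^1 *)
Definition cohomologous (c c' : (L -> L -> M) * (L -> M)) : Prop :=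
  exists psi, is_C1 psi /\
    (forall x y, c.1 x y - c'.1 x y = dCE1 psi x y) /\
    (forall x, c.2 x - c'.2 x = delta1 psi x).

End Ext.
End RLR.

(* Main.v *)
Require Import Defs.
From HB Require Import structures.
From mathcomp Require Import all_boot all_algebra.
From Stdlib Require Import ClassicalEpsilon.
Set Implicit Arguments. Unset Strict Implicit. Unset Printing Implicit Defensive.
Import GRing.Theory.
Local Open Scope ring_scope.

Lemma acS (V : zmodType) (a b t : V) : a = b -> a + t = b + t.
Proof. by move->. Qed.

Ltac ac_loop :=
  first [ reflexivity
        | match goal with |- _ = _ + ?t =>
            do 30 (try rewrite [in LHS](addrAC _ t)); apply: acS; ac_loop end ].
Ltac ac := rewrite ?addr0 ?add0r; rewrite -[LHS]add0r -[RHS]add0r !addrA; ac_loop.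

Lemma selfadd (V : zmodType) (x y : V) : x = x + y -> y = 0.
Proof. by move=> /eqP; rewrite -subr_eq0 opprD addrA subrr add0r oppr_eq0 => /eqP. Qed.

Section Prelim.
Variables (K : fieldType) (A : comAlgType K).
Hypothesis char2 : 2%:R = 0 :> K.

Lemma dbl (V : lmodType A) (v : V) : v + v = 0.
Proof.
have -> : v + v = v *+ 2 by rewrite mulr2n.
by rewrite -scaler_nat -(rmorph_nat (in_alg A)) /= char2 scale0r scale0r.
Qed.

Lemma oppE (V : lmodType A) (v : V) : - v = v.
Proof. by apply/eqP; rewrite eq_sym -addr_eq0 dbl. Qed.

Lemma dblA (a : A) : a + a = 0.
Proof.
have -> : a + a = a *+ 2 by rewrite mulr2n.
by rewrite -mulr_natl -(rmorph_nat (in_alg A)) /= char2 scale0r mul0r.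
Qed.

Lemma oppEA (a : A) : - a = a.
Proof. by apply/eqP; rewrite eq_sym -addr_eq0 dblA. Qed.

Lemma cancel_last (V : lmodType A) (S t : V) : S = 0 -> S + t + t = 0.
Proof. by move->; rewrite add0r dbl. Qed.
Lemma ac2_start (V : lmodType A) (l r : V) : l + r = 0 -> l = r.
Proof. by move/eqP; rewrite addr_eq0 oppE => /eqP. Qed.
Lemma use_h (V : lmodType A) (a b l r : V) : a = b -> l + a = r + b -> l = r.
Proof. by move-> => /addIr. Qed.

Section Lin.
Variables (V W : lmodType A) (f : V -> W).
Hypothesis Hf : A_linear f.
Lemma lin0 : f 0 = 0.
Proof. have := Hf 1 0 0; rewrite !scale1r !addr0; exact: selfadd. Qed.
Lemma linD x y : f (x + y) = f x + f y.
Proof. by have := Hf 1 x y; rewrite !scale1r => ->. Qed.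
Lemma linZ a x : f (a *: x) = a *: f x.
Proof. by have := Hf a x 0; rewrite !addr0 lin0 addr0 => ->. Qed.
Lemma linN x : f (- x) = - f x.
Proof. by rewrite -scaleN1r linZ scaleN1r. Qed.
End Lin.

Section Lie.
Variables (V : lmodType A) (br : V -> V -> V).
Hypothesis Hb : is_lie br.
Lemma brDl x y z : br (x + y) z = br x z + br y z.
Proof. by have := Hb.1 1 x y z; rewrite scale1r !scale1r => ->. Qed.
Lemma brDr x y z : br x (y + z) = br x y + br x z.
Proof. by have := Hb.2.1 1 x y z; rewrite scale1r !scale1r => ->. Qed.
Lemma br0l z : br 0 z = 0.
Proof. have := brDl 0 0 z; rewrite addr0; exact: selfadd. Qed.
Lemma br0r z : br z 0 = 0.
Proof. have := brDr z 0 0; rewrite addr0; exact: selfadd. Qed.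
Lemma brxx x : br x x = 0.
Proof. exact: Hb.2.2.1. Qed.
Lemma brC x y : br x y = br y x.
Proof.
have := brxx (x + y); rewrite brDl !brDr !brxx add0r addr0 => /eqP.
by rewrite addr_eq0 oppE => /eqP.
Qed.
Lemma brJ x y z : br x (br y z) + br y (br z x) + br z (br x y) = 0.
Proof. exact: Hb.2.2.2. Qed.
End Lie.

Section Restr.
Variables (V : lmodType A) (br : V -> V -> V) (pm : V -> V).
Hypothesis Hr : is_restricted_lie br pm.
Lemma pmD x y : pm (x + y) = pm x + pm y + br x y.
Proof. exact: Hr.2.2.2. Qed.
Lemma pm0 : pm 0 = 0.
Proof.
have := pmD 0 0; rewrite addr0 br0r ?addr0; [exact: selfadd| exact: Hr.1].
Qed.
End Restr.

End Prelim.
Section Main.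
Variables (K : fieldType) (A : comAlgType K).
Hypothesis char2 : 2%:R = 0 :> K.
Variables (L : lmodType A) (brL : L -> L -> L) (pmL : L -> L) (thL : L -> A -> A).
Hypothesis HL : is_RLR brL pmL thL.
Variables (M : lmodType A) (brM : M -> M -> M) (pmM : M -> M) (thM : M -> A -> A).
Hypothesis HM : is_RLR brM pmM thM.
Hypothesis HMab : strongly_abelian brM pmM.
Hypothesis HthM : forall m a, thM m a = 0.
Variable rho : L -> M -> M.
Hypothesis Hrho : is_RLR_module brL pmL thL rho.

Local Notation oppE := (oppE char2).
Local Notation oppEA := (oppEA char2).
Local Notation dbl := (dbl char2).

Ltac ac2_loop :=
  first [ reflexivity
        | match goal with |- _ + ?t = 0 =>
            do 30 (try rewrite [in LHS](addrAC _ t)); apply: (cancel_last char2); ac2_loop end ].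
Ltac ac2 := apply: (ac2_start char2); rewrite ?addr0 ?add0r; rewrite -[LHS]add0r !addrA; ac2_loop.



Section RLRfacts.
Variables (V : lmodType A) (br : V -> V -> V) (pm : V -> V) (th : V -> A -> A).
Hypothesis H : is_RLR br pm th.
Lemma R_lie : is_lie br. Proof. exact: H.1.1. Qed.
Lemma R_rl : is_restricted_lie br pm. Proof. exact: H.1. Qed.
Lemma th0 b : th 0 b = 0.
Proof. have := H.2.2.1 1 0 0 b; rewrite scale1r addr0 mul1r; exact: selfadd. Qed.
Lemma thD x y b : th (x + y) b = th x b + th y b.
Proof. by have := H.2.2.1 1 x y b; rewrite scale1r mul1r. Qed.
Lemma thZ a x b : th (a *: x) b = a * th x b.
Proof. by have := H.2.2.1 a x 0 b; rewrite addr0 th0 addr0. Qed.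
Lemma brZr x a y : br x (a *: y) = a *: br x y + th x a *: y.
Proof. exact: H.2.2.2.2.2.1. Qed.
Lemma brZl a x y : br (a *: x) y = a *: br x y + th y a *: x.
Proof. by rewrite (brC char2 R_lie) brZr (brC char2 R_lie). Qed.
Lemma pmZ a x : pm (a *: x) = a ^+ 2 *: pm x + th (a *: x) a *: x.
Proof. exact: H.2.2.2.2.2.2. Qed.
Lemma pmK k x : pm (k%:A *: x) = (k ^+ 2)%:A *: pm x.
Proof. exact: H.1.2.1. Qed.
Lemma brK k x y : br (k%:A *: x) y = k%:A *: br x y.
Proof. by have := R_lie.1 k x 0 y; rewrite addr0 (br0l R_lie) addr0. Qed.
Lemma brpm x y : br (pm x) y = br x (br x y).
Proof. exact: H.1.2.2.1. Qed.
End RLRfacts.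

Lemma rhoDm x m n : rho x (m + n) = rho x m + rho x n.
Proof. by have := Hrho.1 x 1 m n; rewrite scale1r !scale1r. Qed.
Lemma rhox0 x : rho x 0 = 0.
Proof. have := rhoDm x 0 0; rewrite addr0; exact: selfadd. Qed.
Lemma rhoDx x y m : rho (x + y) m = rho x m + rho y m.
Proof. by have := Hrho.2.1 1 x y m; rewrite !scale1r. Qed.
Lemma rho0m m : rho 0 m = 0.
Proof. have := rhoDx 0 0 m; rewrite addr0; exact: selfadd. Qed.
Lemma rhoZx a x m : rho (a *: x) m = a *: rho x m.
Proof. by have := Hrho.2.1 a x 0 m; rewrite addr0 rho0m addr0. Qed.
Lemma rhoZm x a m : rho x (a *: m) = a *: rho x m + thL x a *: m.
Proof. exact: Hrho.2.2.2.2. Qed.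
Lemma rhoKm x k m : rho x (k%:A *: m) = k%:A *: rho x m.
Proof. by have := Hrho.1 x k m 0; rewrite addr0 rhox0 addr0. Qed.
Lemma rho_br x y m : rho (brL x y) m = rho x (rho y m) + rho y (rho x m).
Proof. by rewrite Hrho.2.2.1 oppE. Qed.
Lemma rho_pm x m : rho (pmL x) m = rho x (rho x m).
Proof. exact: Hrho.2.2.2.1. Qed.

Local Notation EXT := (abelian_ext brL pmL thL brM pmM thM).

Section Coord.
Variables (X : EXT) (s : L -> ext_E X).
Hypothesis Hs : A_linear s.
Hypothesis Hps : forall x, @ext_pi _ _ _ _ _ _ _ _ _ _ X (s x) = x.
Hypothesis Hind : induces rho X.

Local Notation E := (ext_E X).
Local Notation br := (@ext_br _ _ _ _ _ _ _ _ _ _ X).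
Local Notation pm := (@ext_pm _ _ _ _ _ _ _ _ _ _ X).
Local Notation th := (@ext_th _ _ _ _ _ _ _ _ _ _ X).
Local Notation io := (@ext_iota _ _ _ _ _ _ _ _ _ _ X).
Local Notation pi := (@ext_pi _ _ _ _ _ _ _ _ _ _ X).
Local Notation exact := (@ext_exact _ _ _ _ _ _ _ _ _ _ X).
Local Notation ioinj := (@ext_iota_inj _ _ _ _ _ _ _ _ _ _ X).

Let HE := ext_RLR X.
Let Hio := ext_iota_mor X.
Let Hpi := ext_pi_mor X.
Let ioL := Hio.1.
Let piL := Hpi.1.

Lemma pi_io m : pi (io m) = 0.
Proof. by apply/exact; exists m. Qed.
Lemma io_br m n : br (io m) (io n) = 0.
Proof. by rewrite -Hio.2.1 HMab.1 (lin0 ioL). Qed.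
Lemma io_pm m : pm (io m) = 0.
Proof. by rewrite -Hio.2.2.1 HMab.2 (lin0 ioL). Qed.
Lemma th_pi e b : th e b = thL (pi e) b.
Proof. by rewrite Hpi.2.2.2. Qed.

Lemma mu_ex e : exists m, e - s (pi e) = io m.
Proof. apply/exact. by rewrite (linD piL) (linN piL) Hps subrr. Qed.
Definition mu e : M := proj1_sig (constructive_indefinite_description _ (mu_ex e)).
Lemma muE e : e - s (pi e) = io (mu e).
Proof. exact: (proj2_sig (constructive_indefinite_description _ (mu_ex e))). Qed.
Lemma decomp e : e = s (pi e) + io (mu e).
Proof. by rewrite -muE addrC subrK. Qed.
Lemma pi_coord x m : pi (s x + io m) = x.
Proof. by rewrite (linD piL) Hps pi_io addr0. Qed.
Lemma mu_coord x m : mu (s x + io m) = m.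
Proof.
apply: ioinj; rewrite -muE pi_coord.
by rewrite addrC addKr.
Qed.
Lemma mu0 : mu 0 = 0.
Proof. by rewrite -(mu_coord 0 0) (lin0 Hs) (lin0 ioL) addr0. Qed.

Definition phi x y := mu (br (s x) (s y)).
Definition om x := mu (pm (s x)).

Lemma phiE x y : br (s x) (s y) = s (brL x y) + io (phi x y).
Proof. by rewrite {1}(decomp (br (s x) (s y))) Hpi.2.1 !Hps. Qed.
Lemma omE x : pm (s x) = s (pmL x) + io (om x).
Proof. by rewrite {1}(decomp (pm (s x))) Hpi.2.2.1 !Hps. Qed.

Lemma br_sio x m : br (s x) (io m) = io (rho x m).
Proof. by rewrite -Hind Hps. Qed.
Lemma br_ios m x : br (io m) (s x) = io (rho x m).
Proof. by rewrite (brC char2 (R_lie HE)) br_sio. Qed.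

Lemma br_coord x m y n :
  br (s x + io m) (s y + io n) = s (brL x y) + io (phi x y + rho x n + rho y m).
Proof.
have HlE := R_lie HE.
rewrite (brDl HlE) !(brDr HlE) phiE br_sio br_ios io_br !(linD ioL).
ac.
Qed.
Lemma pm_coord x m : pm (s x + io m) = s (pmL x) + io (om x + rho x m).
Proof. rewrite (pmD (R_rl HE)) omE io_pm br_sio (linD ioL) addr0; ac. Qed.

Lemma coord_eq x m n : s x + io m = s x + io n -> m = n.
Proof. by move/addrI; apply: ioinj. Qed.

Lemma phi_char u v m : br (s u) (s v) = s (brL u v) + io m -> phi u v = m.
Proof. by rewrite phiE; apply: coord_eq. Qed.
Lemma om_char u m : pm (s u) = s (pmL u) + io m -> om u = m.
Proof. by rewrite omE; apply: coord_eq. Qed.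

Lemma phiC x y : phi x y = phi y x.
Proof. by rewrite /phi (brC char2 (R_lie HE)). Qed.

Lemma br_coordl x m y : br (s x + io m) (s y) = s (brL x y) + io (phi x y + rho y m).
Proof. by have := br_coord x m y 0; rewrite (lin0 ioL) addr0 rhox0 addr0 => ->. Qed.
Lemma br_coordr x y n : br (s x) (s y + io n) = s (brL x y) + io (phi x y + rho x n).
Proof. by have := br_coord x 0 y n; rewrite (lin0 ioL) addr0 rhox0 addr0 => ->. Qed.

Lemma addeq0 (V : lmodType A) (p q : V) : p = q -> p + q = 0.
Proof. by move->; rewrite dbl. Qed.

Lemma coc : is_cocycle brL pmL rho (phi, om).
Proof.
have HlE := R_lie HE.
have HlL := R_lie HL.
have phiDl : forall a x y z, phi (a *: x + y) z = a *: phi x z + phi y z.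
  move=> a x y z; apply: phi_char.
  rewrite (linD Hs) (linZ Hs) (brDl HlE) (brZl HE) !phiE th_pi Hps.
  rewrite (brDl HlL) (brZl HL) (linD Hs) (linD Hs) !(linZ Hs) !(linD ioL) (linZ ioL) scalerDr.
  ac.
split; first split.
- by move=> x /=; rewrite /phi (brxx HlE) mu0.
split; first by move=> *; exact: phiDl.
split.
  by move=> a x y z /=; rewrite phiC phiDl !(phiC x).
split.
  move=> k x /=; apply: om_char.
  rewrite (linZ Hs) (pmK HE) omE (pmK HL) (linZ Hs) scalerDr (linZ ioL) //.
split.
  move=> x y /=; apply: om_char.
  rewrite (linD Hs) (pmD (R_rl HE)) !omE phiE (pmD (R_rl HL)) !(linD Hs) !(linD ioL).
  ac.
move=> a x /=; apply: om_char.
rewrite (linZ Hs) (pmZ HE) omE th_pi (linZ piL) Hps (pmZ HL) (linD Hs) !(linZ Hs) scalerDr (linZ ioL).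
ac.
split.
  move=> x y z /=.
  have J := brJ HlE (s x) (s y) (s z).
  rewrite !phiE !br_coordr in J.
  have J2 : s (brL x (brL y z) + brL y (brL z x) + brL z (brL x y)) +
     io (phi x (brL y z) + rho x (phi y z) + (phi y (brL z x) + rho y (phi z x))
         + (phi z (brL x y) + rho z (phi x y))) = 0.
    by rewrite -J !(linD Hs) !(linD ioL); ac.
  rewrite (brJ HlL) (lin0 Hs) add0r in J2.
  have {J2} J3 := ioinj (etrans J2 (esym (lin0 ioL))).
  rewrite -[RHS]J3 /dCE2 (phiC (brL x y)) (phiC (brL y z)) (phiC (brL x z)) (brC char2 HlL x z)
     (phiC z x).
  ac.
move=> x z /=.
have H1 := brpm HE (s x) (s z).
rewrite omE br_coordl phiE br_coordr (brpm HL) in H1.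
have {H1} H2 := coord_eq H1.
rewrite /delta2 (phiC (brL x z)).
have := addeq0 H2.
move=> <-; ac.
Qed.

Lemma muL : A_linear mu.
Proof.
move=> a e f; apply: (@coord_eq (pi (a *: e + f))); rewrite -decomp.
rewrite {1}(decomp e) {1}(decomp f).
rewrite (linD piL) (linZ piL) (linD Hs) (linZ Hs) (linD ioL) (linZ ioL) scalerDr.
ac.
Qed.

Lemma kappa_ex e : exists x m, e = s x + io m.
Proof. by exists (pi e), (mu e); exact: decomp. Qed.
End Coord.
Section Two.
Variables (X Y : EXT) (sX : L -> ext_E X) (sY : L -> ext_E Y).
Hypothesis HsX : A_linear sX.
Hypothesis HsY : A_linear sY.
Hypothesis HpX : forall x, @ext_pi _ _ _ _ _ _ _ _ _ _ X (sX x) = x.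
Hypothesis HpY : forall x, @ext_pi _ _ _ _ _ _ _ _ _ _ Y (sY x) = x.
Hypothesis HiX : induces rho X.
Hypothesis HiY : induces rho Y.

Local Notation ioX := (@ext_iota _ _ _ _ _ _ _ _ _ _ X).
Local Notation ioY := (@ext_iota _ _ _ _ _ _ _ _ _ _ Y).
Local Notation piX := (@ext_pi _ _ _ _ _ _ _ _ _ _ X).
Local Notation piY := (@ext_pi _ _ _ _ _ _ _ _ _ _ Y).
Local Notation brX := (@ext_br _ _ _ _ _ _ _ _ _ _ X).
Local Notation brY := (@ext_br _ _ _ _ _ _ _ _ _ _ Y).
Local Notation pmX := (@ext_pm _ _ _ _ _ _ _ _ _ _ X).
Local Notation pmY := (@ext_pm _ _ _ _ _ _ _ _ _ _ Y).

Let ioXL := (ext_iota_mor X).1.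
Let ioYL := (ext_iota_mor Y).1.
Let piXL := (ext_pi_mor X).1.
Let piYL := (ext_pi_mor Y).1.

Local Notation phiX := (phi HpX).
Local Notation phiY := (phi HpY).
Local Notation omX := (om HpX).
Local Notation omY := (om HpY).
Local Notation muX := (mu HpX).
Local Notation muY := (mu HpY).

Lemma fwd (kappa : ext_E X -> ext_E Y) :
  is_RLR_morphism brX pmX (@ext_th _ _ _ _ _ _ _ _ _ _ X) brY pmY (@ext_th _ _ _ _ _ _ _ _ _ _ Y) kappa ->
  (forall m, kappa (ioX m) = ioY m) ->
  (forall e, piY (kappa e) = piX e) ->
  cohomologous brL pmL rho (phiX, omX) (phiY, omY).
Proof.
move=> Hk Hki Hkp.
have kL := Hk.1.
pose psi x := muY (kappa (sX x)).
have ks : forall x, kappa (sX x) = sY x + ioY (psi x).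
  by move=> x; rewrite {1}(decomp HpY (kappa (sX x))) Hkp HpX.
have kc : forall x m, kappa (sX x + ioX m) = sY x + ioY (psi x + m).
  by move=> x m; rewrite (linD kL) ks Hki (linD ioYL) addrA.
exists psi; split.
  move=> a x y; rewrite /psi (linD HsX) (linZ HsX) (linD kL) (linZ kL).
  exact: (muL HsY HpY).
split.
  move=> x y /=.
  have E1 := Hk.2.1 (sX x) (sX y).
  rewrite (phiE HpX) kc !ks (br_coord HpY HiY) ?rhoDm in E1.
  have E2 := coord_eq E1.
  rewrite oppE /dCE1.
  apply: (use_h E2); ac2.
move=> x /=.
have E1 := Hk.2.2.1 (sX x).
rewrite (omE HpX) kc !ks (pm_coord HpY HiY) in E1.
have E2 := coord_eq E1.
rewrite oppE /delta1.
apply: (use_h E2); ac2.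
Qed.

Lemma bwd : cohomologous brL pmL rho (phiX, omX) (phiY, omY) ->
  ext_equiv X Y.
Proof.
case=> psi [Hpsi [H1 H2]].
pose kappa e := sY (piX e) + ioY (psi (piX e) + muX e).
have kc : forall x m, kappa (sX x + ioX m) = sY x + ioY (psi x + m).
  by move=> x m; rewrite /kappa pi_coord // mu_coord.
have kp : forall e, piY (kappa e) = piX e.
  by move=> e; rewrite /kappa pi_coord.
exists kappa; split; last split.
- split.
    move=> a e f; rewrite /kappa (linD piXL) (linZ piXL) (linD HsY) (linZ HsY).
    rewrite (muL HsX HpX) (linD Hpsi) (linZ Hpsi) !(linD ioYL) !(linZ ioYL) !scalerDr.
    ac.
  split.
    move=> e f.
    have [x [m ->]] := kappa_ex HpX e.
    have [y [n ->]] := kappa_ex HpX f.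
    rewrite (br_coord HpX HiX) !kc (br_coord HpY HiY); congr (_ + _); congr ioY.
    have E := H1 x y; rewrite /= oppE /dCE1 in E.
    rewrite !rhoDm.
    apply: (use_h E); ac2.
  split.
    move=> e.
    have [x [m ->]] := kappa_ex HpX e.
    rewrite (pm_coord HpX HiX) !kc (pm_coord HpY HiY); congr (_ + _); congr ioY.
    have E := H2 x; rewrite /= oppE /delta1 in E.
    rewrite !rhoDm.
    apply: (use_h E); ac2.
  by move=> e b; rewrite (th_pi (kappa e)) kp (th_pi e).
- by move=> m; have := kc 0 m; rewrite (lin0 HsX) (lin0 HsY) (lin0 Hpsi) !add0r.
- exact: kp.
Qed.
End Two.
Lemma sqA (k : K) : (k ^+ 2)%:A = k%:A * k%:A :> A.
Proof. by rewrite -[_%:A]/(in_alg A _) rmorphXn /= expr2. Qed.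

Definition EE : lmodType A := (L * M)%type.
Lemma pairE (a a' : L) (b b' : M) : a = a' -> b = b' -> ((a,b) : EE) = (a',b').
Proof. by move=> -> ->. Qed.
Lemma scaleP a x m : a *: ((x,m) : EE) = (a *: x, a *: m). Proof. by []. Qed.
Lemma addP x m y n : ((x,m) : EE) + (y,n) = (x + y, m + n). Proof. by []. Qed.
Lemma zeroP : (0 : EE) = (0,0). Proof. by []. Qed.

Section Build.
Variable c : (L -> L -> M) * (L -> M).
Hypothesis Hc : is_cocycle brL pmL rho c.

Local Notation c1 := c.1.
Local Notation c2 := c.2.
Let HC2 : is_C2 c1 c2 := Hc.1.
Lemma c1xx x : c1 x x = 0. Proof. exact: HC2.1. Qed.
Lemma c1Al a x y z : c1 (a *: x + y) z = a *: c1 x z + c1 y z. Proof. exact: HC2.2.1. Qed.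
Lemma c1Ar a x y z : c1 x (a *: y + z) = a *: c1 x y + c1 x z. Proof. exact: HC2.2.2.1. Qed.
Lemma c2K k x : c2 (k%:A *: x) = (k ^+ 2)%:A *: c2 x. Proof. exact: HC2.2.2.2.1. Qed.
Lemma c2D x y : c2 (x + y) = c2 x + c2 y + c1 x y. Proof. exact: HC2.2.2.2.2.1. Qed.
Lemma c2Z a x : c2 (a *: x) = a ^+ 2 *: c2 x. Proof. exact: HC2.2.2.2.2.2. Qed.
Lemma c1Dl x y z : c1 (x + y) z = c1 x z + c1 y z.
Proof. by have := c1Al 1 x y z; rewrite !scale1r. Qed.
Lemma c1Dr x y z : c1 x (y + z) = c1 x y + c1 x z.
Proof. by have := c1Ar 1 x y z; rewrite !scale1r. Qed.
Lemma c10l z : c1 0 z = 0.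
Proof. have := c1Dl 0 0 z; rewrite addr0; exact: selfadd. Qed.
Lemma c10r z : c1 z 0 = 0.
Proof. have := c1Dr z 0 0; rewrite addr0; exact: selfadd. Qed.
Lemma c1Zl a x z : c1 (a *: x) z = a *: c1 x z.
Proof. by have := c1Al a x 0 z; rewrite addr0 c10l addr0. Qed.
Lemma c1Zr a x z : c1 x (a *: z) = a *: c1 x z.
Proof. by have := c1Ar a x z 0; rewrite addr0 c10r addr0. Qed.
Lemma c1C x y : c1 x y = c1 y x.
Proof.
have := c1xx (x + y); rewrite c1Dl !c1Dr !c1xx add0r addr0 => /eqP.
by rewrite addr_eq0 oppE => /eqP.
Qed.
Lemma c20 : c2 0 = 0.
Proof. have := c2D 0 0; rewrite addr0 c10l addr0; exact: selfadd. Qed.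

Definition brE (u v : EE) : EE := (brL u.1 v.1, c1 u.1 v.1 + rho u.1 v.2 + rho v.1 u.2).
Definition pmE (u : EE) : EE := (pmL u.1, c2 u.1 + rho u.1 u.2).
Definition thE (u : EE) : A -> A := thL u.1.
Definition ioE (m : M) : EE := (0, m).
Definition piE (u : EE) : L := u.1.

Let HlL := R_lie HL.

Lemma HE_lie : is_lie brE.
Proof.
split.
  move=> k [x m] [y n] [z p]; apply: pairE => /=; first exact: HlL.1.
  rewrite c1Al Hrho.2.1 Hrho.1 !scalerDr; ac.
split.
  move=> k [x m] [y n] [z p]; apply: pairE => /=; first exact: HlL.2.1.
  rewrite c1Ar Hrho.2.1 Hrho.1 !scalerDr; ac.
split.
  move=> [x m]; apply: pairE => /=; first exact: brxx.
  by rewrite c1xx add0r dbl.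
move=> [x m] [y n] [z p]; apply: pairE => /=; first exact: brJ.
have D := Hc.2.1 x y z; rewrite /dCE2 in D.
rewrite !rhoDm !rho_br.
apply: (use_h (esym D)).
rewrite (c1C (brL x y)) (c1C (brL x z)) (c1C (brL y z)) (brC char2 HlL z x) (c1C z x).
ac2.
Qed.

Lemma HE_RLR : is_RLR brE pmE thE.
Proof.
have Hl := HE_lie.
split; first split; first exact: Hl.
  split.
    move=> k [x m]; apply: pairE => /=; first exact: (pmK HL).
    by rewrite c2K rhoZx rhoKm scalerDr scalerA sqA.
  split.
    move=> [x m] [y n]; apply: pairE => /=; first exact: (brpm HL).
    have D := Hc.2.2 x y; rewrite /delta2 in D.
    rewrite !rhoDm rho_pm rho_br.
    apply: (use_h D); rewrite (c1C (brL x y) x); ac2.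
  move=> [x m] [y n]; apply: pairE => /=; first exact: (pmD (R_rl HL)).
  rewrite c2D rhoDx !rhoDm; ac.
split; first by move=> u; exact: HL.2.1.
split; first by move=> a [x m] [y n] b; exact: HL.2.2.1.
split; first by move=> [x m] [y n] b; rewrite /thE /=; exact: HL.2.2.2.1.
split; first by move=> [x m] b; rewrite /thE /=; exact: HL.2.2.2.2.1.
split.
  move=> [x m] a [y n]; apply: pairE => /=; first exact: (brZr HL).
  rewrite c1Zr rhoZm rhoZx !scalerDr; ac.
move=> a [x m]; apply: pairE => /=; first exact: (pmZ HL).
change (thE (a *: (x, m)) a) with (thL (a *: x) a).
rewrite c2Z rhoZx rhoZm (thZ HL) !scalerDr !scalerA expr2; ac.
Qed.

Lemma ioE_mor : is_RLR_morphism brM pmM thM brE pmE thE ioE.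
Proof.
split.
  by move=> a m n; apply: pairE => /=; rewrite ?scaler0 ?addr0.
split.
  move=> m n; apply: pairE => /=; first by rewrite (br0l HlL).
  by rewrite HMab.1 c10l !rho0m !addr0.
split.
  move=> m; apply: pairE => /=; first by rewrite (pm0 (R_rl HL)).
  by rewrite HMab.2 c20 rho0m addr0.
by move=> m b; rewrite /thE /ioE /= (th0 HL) HthM.
Qed.

Lemma piE_mor : is_RLR_morphism brE pmE thE brL pmL thL piE.
Proof. by split; [move=> a [x m] [y n] | split; [|split]]. Qed.

Lemma ioE_inj : injective ioE.
Proof. by move=> m n []. Qed.
Lemma piE_surj : forall x : L, exists e, piE e = x.
Proof. by move=> x; exists (x, 0). Qed.
Lemma E_exact : forall e, piE e = 0 <-> exists m, e = ioE m.
Proof.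
move=> [x m]; split; first by rewrite /piE /= => ->; exists m.
by case=> n [-> _].
Qed.

Definition X0 : EXT :=
  @AbelianExt _ _ _ _ brL pmL thL brM pmM thM EE brE pmE thE HE_RLR ioE piE
    ioE_mor piE_mor ioE_inj piE_surj E_exact.

Lemma X0_ind : induces rho X0.
Proof.
move=> [x p] m; apply: pairE => /=; first by rewrite (br0r HlL).
by rewrite c10r rho0m add0r addr0.
Qed.

Definition s0 (x : L) : ext_E X0 := ((x, 0) : EE).
Lemma s0L : A_linear s0.
Proof. by move=> a x y; apply: pairE => /=; rewrite ?scaler0 ?addr0. Qed.
Lemma s0p : forall x, @ext_pi _ _ _ _ _ _ _ _ _ _ X0 (s0 x) = x.
Proof. by []. Qed.

Lemma phi0E x y : phi s0p x y = c.1 x y.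
Proof.
apply: phi_char; apply: pairE => /=; first by rewrite addr0.
by rewrite !rhox0 !addr0 add0r.
Qed.
Lemma om0E x : om s0p x = c.2 x.
Proof.
apply: om_char; apply: pairE => /=; first by rewrite addr0.
by rewrite !rhox0 !addr0 add0r.
Qed.
End Build.
Hypothesis Lproj : projective_module L.

Lemma sec_ex (X : EXT) : exists s : L -> ext_E X,
  A_linear s /\ (forall x, @ext_pi _ _ _ _ _ _ _ _ _ _ X (s x) = x).
Proof.
have Hid : A_linear (@id L) by [].
have [h [Hh Hh2]] := Lproj (ext_pi_mor X).1 (ext_pi_surj X) Hid.
by exists h.
Qed.

Definition secp (X : EXT) := constructive_indefinite_description _ (sec_ex X).
Definition cls (X : EXT) : (L -> L -> M) * (L -> M) :=
  (phi (proj2 (proj2_sig (secp X))), om (proj2 (proj2_sig (secp X)))).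

Lemma main_in :
  exists cls : EXT -> (L -> L -> M) * (L -> M),
    (forall X, induces rho X -> is_cocycle brL pmL rho (cls X)) /\
    (forall X Y, induces rho X -> induces rho Y ->
       (ext_equiv X Y <-> cohomologous brL pmL rho (cls X) (cls Y))) /\
    (forall c, is_cocycle brL pmL rho c ->
       exists X, induces rho X /\ cohomologous brL pmL rho c (cls X)).
Proof.
exists cls; split.
  move=> X HX; rewrite /cls; case: (secp X) => s [Hs Hps] /=.
  exact: coc.
split.
  move=> X Y HX HY; rewrite /cls.
  case: (secp X) => sX [HsX HpX]; case: (secp Y) => sY [HsY HpY] /=; split.
    case=> kappa [Hk [Hki Hkp]]; eapply fwd; eauto.
  by move=> H; eapply bwd; eauto.
move=> c Hc; exists (X0 Hc); split; first exact: X0_ind.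
rewrite /cls; case: (secp (X0 Hc)) => s [Hs Hps] /=.
move: (proj2 (conj Hs Hps)) => {}Hps.
have Hco : cohomologous brL pmL rho (phi (s0p Hc), om (s0p Hc)) (phi Hps, om Hps).
  apply: (@fwd (X0 Hc) (X0 Hc) (s0 Hc) s (s0L Hc) Hs (s0p Hc) Hps (@X0_ind c Hc) id) => //.
case: Hco => psi [Hpsi [H1 H2]]; exists psi; split=> //; split.
  by move=> x y /=; rewrite -(phi0E Hc); exact: H1.
by move=> x /=; rewrite -(om0E Hc); exact: H2.
Qed.
End Main.

Unset Implicit Arguments.
Set Strict Implicit.
Theorem mainTheorem1 (K : fieldType) (A : comAlgType K) (char2 : 2%:R = 0 :> K)
  (L : lmodType A) (brL : L -> L -> L) (pmL : L -> L) (thL : L -> A -> A)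
  (HL : is_RLR brL pmL thL) (Lproj : projective_module L)
  (M : lmodType A) (brM : M -> M -> M) (pmM : M -> M) (thM : M -> A -> A)
  (HM : is_RLR brM pmM thM) (HMab : strongly_abelian brM pmM)
  (HthM : forall m a, thM m a = 0)
  (rho : L -> M -> M) (Hrho : is_RLR_module brL pmL thL rho) :
  exists cls : abelian_ext brL pmL thL brM pmM thM -> (L -> L -> M) * (L -> M),
    (forall X, induces rho X -> is_cocycle brL pmL rho (cls X)) /\
    (forall X Y, induces rho X -> induces rho Y ->
       (ext_equiv X Y <-> cohomologous brL pmL rho (cls X) (cls Y))) /\
    (forall c, is_cocycle brL pmL rho c ->
       exists X, induces rho X /\ cohomologous brL pmL rho c (cls X)).
Proof.
by eapply main_in; eassumption.
Qed.
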